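(* Let $P$ be a finite propositional normal logic program, and let $B$ be the operator on subsets of $\mathit{At}(P)$ defined in the context. Then: (1) $B$ is monotone: $F_1\subseteq F_2\subseteq \mathit{At}(P)$ implies $B(F_1)\subseteq B(F_2)$. (2) For every $F\subseteq \mathit{At}(P)$, $A(F)\subseteq B(F)$. (3) For every $F\subseteq F_{wfs}$, $B(F)\subseteq F_{wfs}$. (4) The least fixpoint of $B$ equals $F_{wfs}$. (5) For every $F\subseteq \mathit{At}(P)$, $B(F)=F\cup\big(\overline{F}\setminus LM(P_{F,T}^h)\big)$, where $T=GL(\overline{F})$.
   Context: $P$ is a finite propositional normal logic program (rules $a\leftarrow b_1,\dots,b_m,\mathbf{not}(c_1),\dots,\mathbf{not}(c_n)$). $\mathit{At}(P)$ is the set of atoms occurring in $P$; for $X\subseteq \mathit{At}(P)$, $\overline{X}=\mathit{At}(P)\setminus X$. For a Horn program $Q$, $LM(Q)$ is its least model. For $M\subseteq\mathit{At}(P)$, $P_M$ is obtained from $P$ by removing all rules whose bodies contain a literal $\mathbf{not}(a)$ with $a\in M$; $P^h$ is obtained from $P$ by deleting all negative literals from all rule bodies; $P_M^h=(P_M)^h$. The Gelfond–Lifschitz operator is $GL(M)=LM(P_M^h)$; it is antimonotone. $T_{wfs}=\mathrm{lfp}(GL\circ GL)$ and $F_{wfs}=\overline{GL(T_{wfs})}$ (the atoms true, resp. false, in the well-founded semantics). $A(M)=\overline{GL(GL(\overline{M}))}$. For $F,T\subseteq \mathit{At}(P)$, $P_{F,T}$ is obtained from $P$ by removing (i) all rules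 whose head is in $F$, (ii) all rules whose body contains a positive occurrence of an atom of $F$, (iii) all rules whose body contains $\mathbf{not}(a)$ with $a\in T$; $P_{F,T}^h=(P_{F,T})^h$. The operator $B$ is $B(F)=\overline{LM(P_{F,T}^h)}$ where $T=GL(\overline{F})$. *)

(* Defs.v *)
From mathcomp Require Import all_boot.
Set Implicit Arguments. Unset Strict Implicit. Unset Printing Implicit Defensive.

Section LP.
Variable A : finType.

(* a rule  head <- pos_1,...,pos_m, not(neg_1),...,not(neg_n) *)
Record rule := Rule { head : A; pos : seq A; neg : seq A }.

Definition program := seq rule.

Implicit Types (P Q : program) (M X F T : {set A}).

Definition At P : {set A} :=
  [set a | has (fun r => (head r == a) || (a \in pos r) || (a \in neg r)) P].

Definition compl P X : {set A} := At P :\: X.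

(* M is a model of the Horn program Q (negative literals are not considered;
   LM is only applied to programs of the form _^h, which have none). *)
Definition horn_model Q M : bool :=
  all (fun r => all (fun b => b \in M) (pos r) ==> (head r \in M)) Q.

Definition LM Q : {set A} := \bigcap_(M : {set A} | horn_model Q M) M.

Definition reduct P M : program :=
  [seq r <- P | ~~ has (fun a => a \in M) (neg r)].

Definition hpart P : program := [seq Rule (head r) (pos r) [::] | r <- P].

Definition GL P M : {set A} := LM (hpart (reduct P M)).

Definition Twfs P : {set A} := fixset (fun X => GL P (GL P X)).
Definition Fwfs P : {set A} := compl P (GL P (Twfs P)).

Definition Aop P M : {set A} := compl P (GL P (GL P (compl P M))).

Definition PFT P F T : program :=
  [seq r <- P | [&& head r \notin F,
                    ~~ has (fun a => a \in F) (pos r) &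
                    ~~ has (fun a => a \in T) (neg r)]].

Definition Bop P F : {set A} :=
  compl P (LM (hpart (PFT P F (GL P (compl P F))))).

End LP.

(* Main.v *)
Require Import Defs.
From mathcomp Require Import all_boot.
Require Import Defs.
Set Implicit Arguments.

Section Aux.
Variable A : finType.
Implicit Types (Q P : program A) (M X Y F : {set A}).

Lemma LM_min Q M : horn_model Q M -> LM Q \subset M.
Proof. move=> h; apply/subsetP => x /bigcapP; exact. Qed.

Lemma LM_model Q : horn_model Q (LM Q).
Proof.
suff H: forall Q', (forall M, horn_model Q M -> horn_model Q' M) -> horn_model Q' (LM Q).
  by apply: H.
elim=> [|r Q' IH] // H.
rewrite /horn_model /=; apply/andP; split; last first.
  by apply: IH => M /H /andP [].
apply/implyP => hp; apply/bigcapP => M hM.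
move: (H M hM) => /andP [/implyP h _]; apply: h.
apply: sub_all hp => x /bigcapP; exact.
Qed.

Lemma horn_hf (p : pred (rule A)) Q M :
  horn_model (hpart (filter p Q)) M =
  all (fun r => p r ==> (all (fun b => b \in M) (pos r) ==> (head r \in M))) Q.
Proof. by rewrite /horn_model /hpart all_map all_filter. Qed.

Lemma LM_sub (p1 p2 : pred (rule A)) Q :
  (forall r, p1 r -> p2 r) ->
  LM (hpart (filter p1 Q)) \subset LM (hpart (filter p2 Q)).
Proof.
move=> h; apply/subsetP => x /bigcapP hx; apply/bigcapP => M hM.
apply: hx; move: hM; rewrite !horn_hf; apply: sub_all => r /=.
by case: (p1 r) (h r) => //= ->.
Qed.

Lemma heads_At Q : all (fun r => head r \in At Q) Q.
Proof.
suff H: forall s, (forall a, has (fun r => (head r == a) || (a \in pos r) || (a \in neg r)) s ->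
   a \in At Q) -> all (fun r => head r \in At Q) s.
  by apply: H => a h; rewrite inE.
elim=> [|r s IH] // H /=.
apply/andP; split; first by apply: H; rewrite /= eqxx.
by apply: IH => a h; apply: H; rewrite /= h orbT.
Qed.

Lemma LM_At (p : pred (rule A)) Q : LM (hpart (filter p Q)) \subset At Q.
Proof.
apply: LM_min; rewrite horn_hf.
by apply: sub_all (heads_At Q) => r /= ->; rewrite !implybT.
Qed.

Lemma all3 (T : Type) (a b c : pred T) s :
  all a s -> all b s -> (forall x, a x -> b x -> c x) -> all c s.
Proof.
move=> ha hb h; elim: s ha hb => //= x s IH /andP [ax hs] /andP [bx hs'].
by rewrite h // IH.
Qed.

Lemma GL_At P M : GL P M \subset At P.
Proof. exact: LM_At. Qed.

Lemma GL_anti P M1 M2 : M1 \subset M2 -> GL P M2 \subset GL P M1.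
Proof.
move=> s; apply: LM_sub => r; apply: contra; apply: sub_has => x /=.
exact: (subsetP s).
Qed.

Lemma complK P X : X \subset At P -> compl P (compl P X) = X.
Proof.
move=> s; apply/setP => x; rewrite /compl !in_setD.
case xX: (x \in X) => /=; last by case: (x \in At P).
by rewrite (subsetP s x xX).
Qed.

Lemma compl_anti P X Y : X \subset Y -> compl P Y \subset compl P X.
Proof. exact: setDS. Qed.

Lemma LPFT_GL P F :
  LM (hpart (PFT P F (GL P (compl P F)))) \subset GL P (GL P (compl P F)).
Proof. by apply: LM_sub => r /and3P []. Qed.

Lemma LPFT_F P F T : LM (hpart (PFT P F T)) \subset ~: F.
Proof.
apply: LM_min; rewrite horn_hf; elim: P => //= r s ->; rewrite andbT.
by apply/implyP => /and3P [h _ _]; apply/implyP => _; rewrite inE h.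
Qed.

End Aux.

Theorem theorem1 (A : finType) (P : program A) :
  (* (1) monotonicity of B *)
  (forall F1 F2 : {set A}, F1 \subset F2 -> F2 \subset At P ->
     Bop P F1 \subset Bop P F2) /\
  (* (2) A(F) is contained in B(F) *)
  (forall F : {set A}, F \subset At P -> Aop P F \subset Bop P F) /\
  (* (3) B maps subsets of F_wfs into F_wfs *)
  (forall F : {set A}, F \subset Fwfs P -> Bop P F \subset Fwfs P) /\
  (* (4) F_wfs is the least fixpoint of B (on subsets of At(P)) *)
  (Bop P (Fwfs P) = Fwfs P /\
   forall F : {set A}, F \subset At P -> Bop P F = F -> Fwfs P \subset F) /\
  (* (5) explicit form of B *)
  (forall F : {set A}, F \subset At P ->
     Bop P F = F :|: (compl P F :\: LM (hpart (PFT P F (GL P (compl P F)))))).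
Proof.
have mono1 : forall F1 F2 : {set A}, F1 \subset F2 -> Bop P F1 \subset Bop P F2.
  move=> F1 F2 s; apply: compl_anti; apply: LM_sub => r /and3P [h1 h2 h3].
  apply/and3P; split.
  - by apply: contra h1; exact: (subsetP s).
  - by apply: contra h2; apply: sub_has => x /=; exact: (subsetP s).
  - apply: contra h3; apply: sub_has => /=; apply/subsetP; apply: GL_anti; exact: compl_anti.
have Hmono : {homo (fun X => GL P (GL P X)) : X Y / X \subset Y}.
  by move=> X Y s; apply: GL_anti; apply: GL_anti.
set Tw := Twfs P.
have TwK : GL P (GL P Tw) = Tw by apply: fixsetK.
set U := GL P Tw.
have UAt : U \subset At P by apply: GL_At.
have fix4 : Bop P (Fwfs P) = Fwfs P.
  rewrite /Bop /Fwfs -/U complK // TwK; congr (compl P _).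
  set L := LM _.
  have LU : L \subset U by apply: LM_sub => r /and3P [].
  apply/eqP; rewrite eqEsubset LU /=.
  apply: LM_min; rewrite horn_hf.
  have hL := LM_model (hpart (PFT P (compl P U) Tw)); rewrite horn_hf -/L in hL.
  have hU := LM_model (hpart (reduct P Tw)); rewrite horn_hf in hU.
  refine (@all3 _ _ _ _ _ hL hU _) => r /implyP hr1 /implyP hr2; apply/implyP => red.
  apply/implyP => posL.
  have posU : all (fun b => b \in U) (pos r).
    by apply: sub_all posL => x /= xL; exact: (subsetP LU).
  have hU' : head r \in U by move: (hr2 red) => /implyP; apply.
  move: (hr1) => /(_ _) /implyP; apply => //.
  apply/and3P; split => //.
  - by rewrite /compl inE hU'.
  - rewrite -all_predC; apply: sub_all posU => x /= xU.
    by rewrite /compl inE xU.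
split.
  by move=> F1 F2 s _; apply: mono1.
split.
  move=> F _; apply: compl_anti; exact: LPFT_GL.
split.
  by move=> F s; rewrite -fix4; apply: mono1.
split.
  split => // F FAt BF.
  set W := compl P F.
  set L := LM (hpart (PFT P F (GL P W))).
  have WL : W = L.
    rewrite /W -BF /Bop -/W -/L complK //; exact: LM_At.
  have WGG : W \subset GL P (GL P W) by rewrite {1}WL; apply: LPFT_GL.
  have TwW : Tw \subset GL P W.
    rewrite /Tw /Twfs /fixset.
    elim: #|A| => [|k IH] /=; first exact: sub0set.
    by apply: GL_anti; exact: (subset_trans WGG (GL_anti P IH)).
  have WU : W \subset U by apply: subset_trans WGG (GL_anti P TwW).
  by rewrite /Fwfs -/U -(complK FAt) compl_anti.
move=> F FAt.
set L := LM _.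
have LF := @LPFT_F A P F (GL P (compl P F)); rewrite -/L in LF.
apply/setP => x; rewrite /Bop -/L /compl in_setU !in_setD.
case xF: (x \in F) => /=.
  rewrite (subsetP FAt x xF) andbT.
  by apply/negP => xL; move: (subsetP LF x xL); rewrite in_setC xF.
by [].
Qed.
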